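(* Let $k\geq2$ be an integer, let $\mathcal{S}\subseteq\mathbb{A}$ be a ring (where $\mathbb{A}$ is the set of real algebraic numbers), let $F_0,\dots,F_{k-1}$ be square matrices over $\mathcal{S}$ all of the same dimension with $F_0$ the zero matrix, and set $F(n)=F_{n_0}\cdots F_{n_{s-1}}$ for $(n)_k=n_{s-1}\cdots n_0$. Then for every real $\rho'>0$, the joint spectral radius $\rho$ of $\{F_1,\dots,F_{k-1}\}$ satisfies $\rho\leq\rho'$ iff for every $\varepsilon>0$ we have $F(n)\in O\bigl(n^{\log_k\rho'+\varepsilon}\bigr)$ as $n\to\infty$.
   Context: For $n\in\mathbb{N}_0$, $(n)_k=n_{s-1}\cdots n_0$ is the standard base-$k$ representation of $n$ (no leading zeros; $(0)_k$ empty). The joint spectral radius of a finite set $S$ of square matrices is $\rho(S)=\lim_{\ell\to\infty}\max\{\|A_1\cdots A_\ell\|^{1/\ell}: A_i\in S\}$ for any matrix norm. A matrix sequence $(F(n))$ is in $O(g(n))$ if there are $n_0$, $c>0$ with $\|F(n)\|\leq c\,g(n)$ for $n\geq n_0$ (equivalently, each entry sequence is in $O(g(n))$). *)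

(* Defs.v *)
From HB Require Import structures.
From mathcomp Require Import all_boot all_order all_algebra.
From mathcomp Require Import all_classical all_reals all_analysis.
Set Implicit Arguments. Unset Strict Implicit. Unset Printing Implicit Defensive.
Import Order.TTheory GRing.Theory Num.Theory.
Local Open Scope ring_scope.

Definition algebraic_num (R : realType) (x : R) : Prop :=
  exists p : {poly rat}, p != 0 /\ root (map_poly ratr p) x.

Definition alg_subring (R : realType) (S : pred R) : Prop :=
  [/\ 1 \in S,
      (forall x y, x \in S -> y \in S -> x - y \in S),
      (forall x y, x \in S -> y \in S -> x * y \in S) &
      (forall x, x \in S -> algebraic_num x)].

Definition mxnorm (R : realType) (d : nat) (M : 'M[R]_d) : R :=
  \sum_(i < d) \sum_(j < d) `|M i j|.

Definition mxprod (R : realType) (d : nat) (I : Type) (A : I -> 'M[R]_d)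
  (w : seq I) : 'M[R]_d := foldr (fun i M => A i *m M) 1%:M w.

Definition jsr_term (R : realType) (d m : nat) (A : 'I_m -> 'M[R]_d) (l : nat) : R :=
  \big[Order.max/0]_(w : l.-tuple 'I_m) mxnorm (mxprod A w).

Definition jsr (R : realType) (d m : nat) (A : 'I_m -> 'M[R]_d) : R :=
  limn (fun l : nat => powR (jsr_term A l) (l%:R)^-1).

(* base-k digits of n, least significant first: (n)_k = n_{s-1}...n_0 gives
   [:: n_0; ...; n_{s-1}]; (0)_k is empty. *)
Fixpoint digits_aux (k fuel n : nat) : seq nat :=
  match fuel with
  | 0 => [::]
  | f.+1 => if n == 0%N then [::] else (n %% k)%N :: digits_aux k f (n %/ k)
  end.
Definition digits (k n : nat) : seq nat := digits_aux k n n.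

Definition Fseq (R : realType) (d k : nat) (F : nat -> 'M[R]_d) (n : nat) : 'M[R]_d :=
  mxprod F (digits k n).

Definition bigO_mx (R : realType) (d : nat) (G : nat -> 'M[R]_d) (g : nat -> R) : Prop :=
  exists n0 : nat, exists2 c : R, 0 < c &
    forall n : nat, (n0 <= n)%N -> mxnorm (G n) <= c * g n.

(* Main.v *)
Require Import Defs.
From HB Require Import structures.
From mathcomp Require Import all_boot all_order all_algebra.
From mathcomp Require Import all_classical all_reals all_analysis.
From mathcomp Require Import zify ring lra.
Import Order.TTheory GRing.Theory Num.Theory.
Set Implicit Arguments. Unset Strict Implicit. Unset Printing Implicit Defensive.
Local Open Scope ring_scope.

Lemma mxnorm_ge0 (R : realType) d (M : 'M[R]_d) : 0 <= mxnorm M.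
Proof. by apply: sumr_ge0 => i _; apply: sumr_ge0 => j _; exact: normr_ge0. Qed.

Lemma mxnorm0 (R : realType) d : mxnorm (0 : 'M[R]_d) = 0.
Proof. by rewrite /mxnorm big1 // => i _; rewrite big1 // => j _; rewrite mxE normr0. Qed.

Lemma mxnorm_mul (R : realType) d (M N : 'M[R]_d) :
  mxnorm (M *m N) <= mxnorm M * mxnorm N.
Proof.
rewrite /mxnorm.
apply: (@le_trans _ _ (\sum_(i < d) \sum_(l < d) `|M i l| * \sum_(j < d) `|N l j|)).
  apply: ler_sum => i _.
  under [X in _ <= X]eq_bigr do rewrite mulr_sumr.
  rewrite exchange_big /=.
  apply: ler_sum => j _; rewrite !mxE.
  apply: le_trans (ler_norm_sum _ _ _) _.
  by apply: ler_sum => l _; rewrite normrM.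
rewrite mulr_suml; apply: ler_sum => i _.
rewrite mulr_suml; apply: ler_sum => l _.
apply: ler_wpM2l => //.
rewrite [X in _ <= X](bigD1 l) //= lerDl; apply: sumr_ge0 => ? _; apply: sumr_ge0 => ? _.
exact: normr_ge0.
Qed.

Lemma mxprod_cat (R : realType) d (I : Type) (A : I -> 'M[R]_d) x y :
  mxprod A (x ++ y) = mxprod A x *m mxprod A y.
Proof.
rewrite /mxprod; elim: x => [|i x IH] /=; first by rewrite mul1mx.
by rewrite IH mulmxA.
Qed.

Lemma jsr_term_ge0 (R : realType) d m (A : 'I_m -> 'M[R]_d) l : 0 <= jsr_term A l.
Proof.
rewrite /jsr_term; elim/big_ind: _ => //= [x y hx hy|w _].
  by rewrite le_max hx.
exact: mxnorm_ge0.
Qed.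

Lemma jsr_term_ub (R : realType) d m (A : 'I_m -> 'M[R]_d) l (x : seq 'I_m) :
  size x = l -> mxnorm (mxprod A x) <= jsr_term A l.
Proof.
move=> /eqP H.
exact: (le_bigmax 0 (fun w : l.-tuple 'I_m => mxnorm (mxprod A w)) (Tuple H)).
Qed.

Lemma jsr_term_submul (R : realType) d m (A : 'I_m -> 'M[R]_d) a b :
  jsr_term A (a + b) <= jsr_term A a * jsr_term A b.
Proof.
rewrite {1}/jsr_term; apply: bigmax_le.
  by apply: mulr_ge0; apply: jsr_term_ge0.
move=> w _; rewrite -(cat_take_drop a w) mxprod_cat.
apply: (@le_trans _ _ (mxnorm (mxprod A (take a w)) * mxnorm (mxprod A (drop a w)))); first exact: mxnorm_mul.
apply: ler_pM; try exact: mxnorm_ge0.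
  by apply: jsr_term_ub; rewrite size_takel // size_tuple leq_addr.
by apply: jsr_term_ub; rewrite size_drop size_tuple addKn.
Qed.

Lemma mxprod_zero (R : realType) d (F : nat -> 'M[R]_d) ds :
  F 0%N = 0 -> 0%N \in ds -> mxprod F ds = 0.
Proof.
move=> F0; rewrite /mxprod; elim: ds => [|c ds IH] //=.
rewrite in_cons => /orP [/eqP <-|/IH ->]; first by rewrite F0 mul0mx.
by rewrite mulmx0.
Qed.

Lemma mxprod_norm_digits (R : realType) d m (F : nat -> 'M[R]_d) ds :
  F 0%N = 0 -> all (fun c => (c < m.+2)%N) ds ->
  mxnorm (mxprod F ds) <= jsr_term (fun i : 'I_m.+1 => F i.+1) (size ds).
Proof.
move=> F0 Hall.
have [h0|h0] := boolP (0%N \in ds).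
  by rewrite mxprod_zero // mxnorm0 jsr_term_ge0.
set x := map (fun c => inord c.-1 : 'I_m.+1) ds.
have -> : mxprod F ds = mxprod (fun i : 'I_m.+1 => F i.+1) x.
  rewrite /x /mxprod; elim: ds Hall h0 {x} => [|c ds IH] //=.
  rewrite in_cons negb_or => /andP [hc hall] /andP [hc0 h0].
  have hc1 : (0 < c)%N by rewrite lt0n eq_sym.
  rewrite IH // inordK ?prednK //; by rewrite -ltnS prednK.
by apply: jsr_term_ub; rewrite size_map.
Qed.

Section Digits.
Local Open Scope nat_scope.

Lemma digits_aux_fuel k f g n : (1 < k)%N -> (n <= f)%N -> (n <= g)%N ->
  digits_aux k f n = digits_aux k g n.
Proof.
move=> hk; elim: f g n => [|f IH] g n.
  by rewrite leqn0 => /eqP -> _; case: g.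
case: g => [|g]; first by rewrite leqn0 => _ /eqP ->.
move=> hf hg /=; case: eqP => // /eqP hn.
have hq : (n %/ k < n)%N by apply: ltn_Pdiv; rewrite // lt0n.
by rewrite (IH g) //; rewrite -ltnS; apply: leq_trans hq _.
Qed.

Lemma digits_aux_lt k f n : (0 < k)%N -> all (fun c => (c < k)%N) (digits_aux k f n).
Proof.
move=> hk; elim: f n => [|f IH] n //=.
by case: eqP => //= _; rewrite ltn_pmod // IH.
Qed.

Lemma digits_aux_size k f n : (1 < k)%N -> (0 < n)%N -> (n <= f)%N ->
  (k ^ (size (digits_aux k f n)).-1 <= n < k ^ (size (digits_aux k f n)))%N.
Proof.
move=> hk; elim: f n => [|f IH] n hn; first by rewrite leqn0 => /eqP h; rewrite h in hn.
move=> hf /=; case: eqP => [h|_]; first by rewrite h in hn.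
have hq : (n %/ k < n)%N by apply: ltn_Pdiv.
have hdiv := divn_eq n k; have hmod : (n %% k < k)%N by rewrite ltn_pmod // ltnW.
have [q0|qpos] := posnP (n %/ k).
  rewrite q0; have -> : digits_aux k f 0 = [::] by case: f {IH hf}.
  rewrite /= expn0 expn1 hn /=; rewrite q0 mul0n add0n in hdiv; by rewrite hdiv.
have := IH (n %/ k) qpos; rewrite -ltnS; move=> /(_ (leq_trans hq hf)).
set s := size _; move=> /andP [h1 h2] /=.
have spos : (0 < s)%N.
  by rewrite lt0n; apply/eqP => s0; rewrite s0 expn0 in h2; rewrite ltnNge qpos in h2.
rewrite -(prednK spos) expnS in h2.
rewrite -/s expnS -(prednK spos) expnS.
set K := (k ^ s.-1)%N in h1 h2 *.
set q := n %/ k in hdiv h1 h2 *; set r := n %% k in hdiv hmod *.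
apply/andP; split; rewrite hdiv; nia.
Qed.

Definition num k (ds : seq nat) : nat := foldr (fun c acc => c + k * acc)%N 0%N ds.

Lemma digits_num k ds : (1 < k)%N -> all (fun c => (0 < c < k)%N) ds ->
  digits k (num k ds) = ds.
Proof.
move=> hk; elim: ds => [|c ds IH] //= /andP [/andP [hc0 hck] hall].
rewrite /digits; set n := (c + k * num k ds)%N.
have hn : (0 < n)%N by rewrite /n addn_gt0 hc0.
have hm : (n %% k = c)%N by rewrite /n mulnC addnC modnMDl modn_small.
have hd : (n %/ k = num k ds)%N by rewrite /n mulnC addnC divnMDl ?divn_small ?addn0 // ltnW.
have hle : (num k ds < n)%N by rewrite /n; nia.
case En : n hn hm hd hle => [//|n'] _ hm hd hle /=.
rewrite hm hd; congr (_ :: _); rewrite -{2}(IH hall) /digits.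
by apply: digits_aux_fuel.
Qed.

End Digits.

Lemma jsr_term_geom (R : realType) d m (A : 'I_m -> 'M[R]_d) (rho : R) L :
  0 < rho -> (0 < L)%N -> jsr_term A L <= rho ^+ L ->
  forall s, jsr_term A s <= (\sum_(j < L) jsr_term A j / rho ^+ j) * rho ^+ s.
Proof.
move=> hr hL hb s; elim/ltn_ind: s => s IH.
have hge : forall j, 0 <= jsr_term A j / rho ^+ j.
  by move=> j; apply: divr_ge0; [exact: jsr_term_ge0| exact/ltW/exprn_gt0].
case: (ltnP s L) => hs.
  apply: (@le_trans _ _ (jsr_term A s / rho ^+ s * rho ^+ s)).
    by rewrite divfK // expf_neq0 // gt_eqF.
  apply: ler_wpM2r; first exact/ltW/exprn_gt0.
  rewrite (bigD1 (Ordinal hs)) //= lerDl; apply: sumr_ge0 => j _; exact: hge.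
have hsL : (s - L < s)%N by rewrite ltn_subrL hL /=; apply: leq_trans hL hs.
have -> : s = (L + (s - L))%N by rewrite subnKC.
apply: le_trans; first exact: jsr_term_submul.
rewrite exprD mulrCA.
apply: ler_pM => //; [exact: jsr_term_ge0 | exact: jsr_term_ge0 | ].
by apply: IH.
Qed.

Lemma root_small (R : realType) (C e : R) : 0 < C -> 0 < e ->
  exists N, forall s, (N <= s)%N -> powR C (s%:R)^-1 < 1 + e.
Proof.
move=> hC he.
have [N _ HN] := nbhs_infty_gtr (ln C / ln (1 + e)).
exists (maxn N 1) => s; rewrite geq_max => /andP [hN hs].
have /= hlt := HN s hN.
have hl : 0 < ln (1 + e) by apply: ln_gt0; rewrite ltrDl.
have hs' : 0 < s%:R :> R by rewrite ltr0n.
rewrite /powR gt_eqF // -[1 + e]lnK ?posrE ?addr_gt0 // ltr_expR.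
rewrite mulrC ltr_pdivrMr //; move: hlt; rewrite ltr_pdivrMr // mulrC; exact.
Qed.

Lemma powR_root_bound (R : realType) (t C rho : R) s : 0 <= t -> 0 <= C -> 0 <= rho ->
  (0 < s)%N -> t <= C * rho ^+ s -> powR t (s%:R)^-1 <= powR C (s%:R)^-1 * rho.
Proof.
move=> ht hC hr hs hb.
have -> : rho = powR (rho ^+ s) (s%:R)^-1.
  by rewrite -powR_mulrn // -powRrM mulfV ?pnatr_eq0 -?lt0n // powRr1.
rewrite -powRM //; last exact: exprn_ge0.
apply: ge0_ler_powR => //; rewrite ?invr_ge0 ?ler0n // nnegrE //.
by apply: mulr_ge0 => //; exact: exprn_ge0.
Qed.

Lemma root_to_pow (R : realType) (t rho : R) L : 0 <= t -> 0 <= rho -> (0 < L)%N ->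
  powR t (L%:R)^-1 <= rho -> t <= rho ^+ L.
Proof.
move=> ht hr hL hb.
have -> : t = powR (powR t (L%:R)^-1) L%:R.
  by rewrite -powRrM mulVf ?pnatr_eq0 -?lt0n // powRr1.
rewrite -powR_mulrn //.
apply: ge0_ler_powR => //; rewrite ?ler0n // nnegrE ?powR_ge0 //.
Qed.

Definition jsra (R : realType) d m (A : 'I_m -> 'M[R]_d) (s : nat) : R :=
  powR (jsr_term A s) (s%:R)^-1.

Definition jsrset (R : realType) d m (A : 'I_m -> 'M[R]_d) : set R :=
  [set x | exists2 s, (0 < s)%N & x = jsra A s].

Lemma jsrset_has_inf (R : realType) d m (A : 'I_m -> 'M[R]_d) : has_inf (jsrset A).
Proof.
split; first by exists (jsra A 1); exists 1%N.
by exists 0 => x [s _ ->]; exact: powR_ge0.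
Qed.

Lemma jsr_fekete (R : realType) d m (A : 'I_m -> 'M[R]_d) :
  (jsra A @ \oo --> inf (jsrset A))%classic.
Proof.
have hinf := jsrset_has_inf A.
have hlam : 0 <= inf (jsrset A).
  apply: lb_le_inf; first by exists (jsra A 1); exists 1%N.
  by move=> x [s _ ->]; exact: powR_ge0.
apply/cvgrPdist_lt => e he.
have he2 : 0 < e / 2 by apply: divr_gt0.
have [x [L hL ->] hx] := inf_adherent he2 hinf.
set lam := inf (jsrset A) in hlam hx *.
set rho := lam + e / 2.
have hrho : 0 < rho by rewrite /rho; lra.
have hb : jsr_term A L <= rho ^+ L.
  by apply: root_to_pow => //; [exact: jsr_term_ge0 | exact: ltW | exact: ltW].
have := jsr_term_geom hrho hL hb; set C0 := \sum_(_ < _) _ => hC.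
have hC0 : 0 <= C0.
  apply: sumr_ge0 => j _; apply: divr_ge0; [exact: jsr_term_ge0| exact/ltW/exprn_gt0].
have hC' : forall s, jsr_term A s <= (C0 + 1) * rho ^+ s.
  move=> s; apply: le_trans (hC s) _; apply: ler_wpM2r; first exact/ltW/exprn_gt0.
  by rewrite lerDl.
have he3 : 0 < e / 2 / rho by apply: divr_gt0.
have [N HN] := root_small (C := C0 + 1) (e := e / 2 / rho) ltac:(lra) he3.
exists (maxn N 1) => // s /=; rewrite geq_max => /andP [hN hs1].
have hge : lam <= jsra A s by apply: (ge_inf (proj2 hinf)); exists s.
have hle : jsra A s <= powR (C0 + 1) (s%:R)^-1 * rho.
  apply: powR_root_bound => //; [exact: jsr_term_ge0 | lra | exact: ltW].
have hP := HN s hN.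
have hP2 : powR (C0 + 1) (s%:R)^-1 * rho < (1 + e / 2 / rho) * rho.
  by rewrite ltr_pM2r.
move: hP2; rewrite mulrDl mul1r divfK ?gt_eqF // => hP2.
have -> : `|lam - jsra A s| = jsra A s - lam :> R.
  by rewrite distrC ger0_norm ?subr_ge0.
have hrd : rho = lam + e / 2 by [].
move: hle hP2; set Q := _ * rho => hle hP2.
clearbody rho; lra.
Qed.

Lemma jsr_inf (R : realType) d m (A : 'I_m -> 'M[R]_d) : jsr A = inf (jsrset A).
Proof. rewrite /jsr; apply: norm_cvg_lim; exact: jsr_fekete. Qed.

Lemma expR_sandwich (R : realType) (a lk u : R) (j : nat) :
  j%:R * lk <= u -> u <= j.+1%:R * lk ->
  expR (a * u) <= expR (a * lk * j%:R) * Num.max 1 (expR (a * lk)) /\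
  expR (a * lk * j.+1%:R) <= expR (a * u) * Num.max 1 (expR (a * lk)).
Proof.
move=> h1 h2.
have hm1 : 1 <= Num.max 1 (expR (a * lk)) by rewrite le_max lexx.
have hm2 : expR (a * lk) <= Num.max 1 (expR (a * lk)) by rewrite le_max lexx orbT.
have hS : j.+1%:R = j%:R + 1 :> R by rewrite -natr1.
rewrite hS in h2 *.
have [ha|ha] := leP 0 a.
- split.
  + apply: (@le_trans _ _ (expR (a * lk * j%:R) * expR (a * lk))).
      rewrite -expRD ler_expR.
      have : 0 <= a * ((j%:R + 1) * lk - u) by apply: mulr_ge0; rewrite // subr_ge0.
      lra.
    by apply: ler_wpM2l => //; exact: expR_ge0.
  + apply: (@le_trans _ _ (expR (a * u) * expR (a * lk))).
      rewrite -expRD ler_expR.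
      have : 0 <= a * (u - j%:R * lk) by apply: mulr_ge0; rewrite // subr_ge0.
      lra.
    by apply: ler_wpM2l => //; exact: expR_ge0.
- split.
  + apply: (@le_trans _ _ (expR (a * lk * j%:R))).
      rewrite ler_expR.
      have : 0 <= (- a) * (u - j%:R * lk) by apply: mulr_ge0; rewrite ?oppr_ge0 ?subr_ge0 // ltW.
      lra.
    by rewrite ler_peMr // expR_ge0.
  + apply: (@le_trans _ _ (expR (a * u))).
      rewrite ler_expR.
      have : 0 <= (- a) * ((j%:R + 1) * lk - u) by apply: mulr_ge0; rewrite ?oppr_ge0 ?subr_ge0 // ltW.
      lra.
    by rewrite ler_peMr // expR_ge0.
Qed.

Lemma ln_digits (R : realType) k n j : (1 < k)%N -> (k ^ j <= n < k ^ j.+1)%N ->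
  j%:R * ln (k%:R : R) <= ln (n%:R : R) <= j.+1%:R * ln (k%:R : R).
Proof.
move=> hk /andP [h1 h2].
have hk0 : (0 < k)%N by apply: ltnW.
have hn : (0 < n)%N by apply: leq_trans h1; rewrite expn_gt0 hk0.
have e1 : forall i, ln ((k ^ i)%:R : R) = i%:R * ln k%:R.
  by move=> i; rewrite natrX lnXn ?ltr0n // mulr_natl.
rewrite -!e1 !ler_ln ?posrE ?ltr0n ?expn_gt0 ?hk0 // !ler_nat h1 /=.
exact: ltnW.
Qed.

Lemma mxprod_map_succ (R : realType) d m (F : nat -> 'M[R]_d) (x : seq 'I_m) :
  mxprod F (map (fun i : 'I_m => i.+1) x) = mxprod (fun i : 'I_m => F i.+1) x.
Proof. by rewrite /mxprod; elim: x => [|i x IH] //=; rewrite IH. Qed.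

Lemma num_pos k ds : ds != [::] -> all (fun c => (0 < c < k)%N) ds -> (0 < num k ds)%N.
Proof. by case: ds => //= c ds _ /andP [/andP [hc _] _]; rewrite addn_gt0 hc. Qed.

Unset Implicit Arguments.

Theorem corollary3p12 (R : realType) (k d : nat) (S : pred R)
  (F : nat -> 'M[R]_d) :
  (2 <= k)%N ->
  alg_subring S ->
  (forall i, (i < k)%N -> forall a b, F i a b \in S) ->
  F 0%N = 0 ->
  forall rho' : R, 0 < rho' ->
    (jsr (fun i : 'I_k.-1 => F i.+1) <= rho' <->
     forall eps : R, 0 < eps ->
       bigO_mx (Fseq k F)
         (fun n => powR (n%:R) (ln rho' / ln (k%:R) + eps))).
Proof.
case: k => [|[|m]] // hk _ _ F0 rho' hrho.
rewrite jsr_inf.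
set A := (fun i : 'I_m.+1 => F i.+1).
have hlk : 0 < ln (m.+2)%:R :> R by apply: ln_gt0; rewrite ltr1n.
have hinf := jsrset_has_inf A.
set lk := ln (m.+2)%:R.
split.
- move=> hj eps heps.
  set a := ln rho' / lk + eps.
  set r := expR (a * lk).
  have hr : rho' < r.
    rewrite /r /a mulrDl divfK ?gt_eqF // expRD lnK ?posrE //.
    by rewrite ltr_pMr // expR_gt1; apply: mulr_gt0.
  have hr0 : 0 < r := expR_gt0 _.
  have hrr : 0 < r - rho' by rewrite subr_gt0.
  have [x [L hL ->] hx] := inf_adherent hrr hinf.
  have hb : jsr_term A L <= r ^+ L.
    apply: root_to_pow => //; [exact: jsr_term_ge0 | exact: ltW |].
    apply: ltW; rewrite /jsra in hx; lra.
  have := jsr_term_geom hr0 hL hb; set C0 := \sum_(_ < _) _ => hC.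
  have hC0 : 0 <= C0.
    apply: sumr_ge0 => j _; apply: divr_ge0; [exact: jsr_term_ge0| exact/ltW/exprn_gt0].
  set M := Num.max 1 r.
  have hM : 1 <= M by rewrite le_max lexx.
  exists 1%N; exists (C0 * M + 1).
    by apply: ltr_wpDl => //; apply: mulr_ge0 => //; lra.
  move=> n hn.
  rewrite /Fseq /digits.
  have hall := digits_aux_lt n n (isT : (0 < m.+2)%N).
  have hsz := digits_aux_size hk hn (leqnn n).
  move: hall hsz; set ds := digits_aux _ _ _ => hall hsz.
  have spos : (0 < size ds)%N.
    rewrite lt0n; apply/eqP => s0; rewrite s0 /= in hsz; lia.
  apply: le_trans (mxprod_norm_digits F0 hall) _.
  apply: le_trans (hC _) _.
  rewrite -(prednK spos) in hsz *.
  set j := (size ds).-1 in hsz *.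
  have /andP [hl1 hl2] := ln_digits R hk hsz.
  have [_ hsw] := expR_sandwich a hl1 hl2.
  rewrite /powR pnatr_eq0 eqn0Ngt hn /=.
  rewrite -/r -/lk -/M in hsw.
  have -> : r ^+ j.+1 = expR (a * lk * j.+1%:R) by rewrite /r expRM_natr.
  apply: (@le_trans _ _ (C0 * (expR (a * ln n%:R) * M))).
    by apply: ler_wpM2l.
  have hE := expR_ge0 (a * ln n%:R).
  move: hE; set E := expR _ => hE.
  nra.
- move=> H; apply/ler_addgt0Pr => e he.
  set r := rho' + e / 2.
  have hr0 : 0 < r by rewrite /r; lra.
  have hrr : 1 < r / rho' by rewrite ltr_pdivlMr // mul1r /r; lra.
  set eps := ln (r / rho') / lk.
  have heps : 0 < eps by apply: divr_gt0 => //; exact: ln_gt0.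
  have [n0 [c hc Hc]] := H eps heps.
  set a := ln rho' / lk + eps in Hc.
  have har : a * lk = ln r.
    rewrite /a /eps mulrDl !divfK ?gt_eqF // -lnM ?posrE ?divr_gt0 //.
    by rewrite mulrC divfK ?gt_eqF.
  set M := Num.max 1 r.
  have hM : 1 <= M by rewrite le_max lexx.
  set C' := c * M / r.
  have hC' : 0 < C' by apply: divr_gt0 => //; apply: mulr_gt0 => //; lra.
  have hbound : forall s, (n0 < s)%N -> jsr_term A s <= C' * r ^+ s.
    move=> s hs; rewrite {1}/jsr_term; apply: bigmax_le.
      by apply: mulr_ge0; [exact: ltW | exact/ltW/exprn_gt0].
    move=> w _.
    have hall : all (fun c => (0 < c < m.+2)%N) (map (fun i : 'I_m.+1 => i.+1) w).
      by rewrite all_map; apply/allP => i _ /=; rewrite ltnS ltn_ord.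
    rewrite -mxprod_map_succ -(digits_num hk hall).
    set ds := map _ _ in hall *.
    have hsds : size ds = s by rewrite /ds size_map size_tuple.
    have hn : (0 < num m.+2 ds)%N.
      by apply: num_pos hall; rewrite -size_eq0 hsds; apply/eqP => s0; rewrite s0 in hs.
    set n := num m.+2 ds in hn *.
    have hsz := digits_aux_size hk hn (leqnn n).
    have hdn : digits_aux m.+2 n n = ds by rewrite -[RHS](digits_num hk hall).
    rewrite hdn hsds in hsz.
    have spos : (0 < s)%N by apply: leq_ltn_trans hs.
    rewrite -(prednK spos) in hsz *.
    set j := s.-1 in hsz *.
    have hn0 : (n0 <= n)%N.
      move/andP: hsz => [hsz _]; apply: leq_trans hsz; apply: ltnW.
      apply: leq_trans (ltn_expl j hk); rewrite /j -ltnS prednK //.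
    apply: le_trans (Hc n hn0) _.
    have /andP [hl1 hl2] := ln_digits R hk hsz.
    have [hsw _] := expR_sandwich a hl1 hl2.
    rewrite -/lk har lnK ?posrE // -/M in hsw.
    rewrite /powR pnatr_eq0 eqn0Ngt hn /=.
    apply: (@le_trans _ _ (c * (expR (ln r * j%:R) * M))).
      by apply: ler_wpM2l => //; exact: ltW.
    rewrite expRM_natr lnK ?posrE // /C' exprS.
    have hrj : 0 <= r ^+ j by exact/ltW/exprn_gt0.
    move: hrj; set Q := r ^+ j => hrj.
    rewrite le_eqVlt; apply/orP; left; apply/eqP; field.
    by rewrite gt_eqF.
  set s0 := n0.+1.
  have [N HN] := root_small hC' (e := e / 2 / r) ltac:(by apply: divr_gt0 => //; lra).
  set s := maxn N s0.
  have hs : (n0 < s)%N by rewrite /s leq_max leqnn orbT.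
  have hsp : (0 < s)%N by apply: leq_ltn_trans hs.
  have hge : inf (jsrset A) <= jsra A s by apply: (ge_inf (proj2 hinf)); exists s.
  have hle : jsra A s <= powR C' (s%:R)^-1 * r.
    by apply: powR_root_bound => //; [exact: jsr_term_ge0 | exact: ltW | exact: ltW | exact: hbound].
  have hP : powR C' (s%:R)^-1 * r < (1 + e / 2 / r) * r.
    by rewrite ltr_pM2r // HN // leq_maxl.
  move: hP; rewrite mulrDl mul1r divfK ?gt_eqF // => hP.
  move: hle hP; set Q := _ * r => hle hP.
  have hrd : r = rho' + e / 2 by [].
  clearbody r; lra.
Qed.
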